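(* Let $K$ be a field of characteristic $0$ and let $f(x)\in K[x,x^{-1}]$ be a non-constant Laurent polynomial. Then there exists a positive integer $N$ such that every element $c\in K$ can be written as $c=\epsilon_1 f(a_1)+\cdots+\epsilon_N f(a_N)$ with $a_1,\dots,a_N\in K^*$ and $\epsilon_1,\dots,\epsilon_N\in\{1,-1\}$. In particular, for $K=\mathbb{Q}$, $f$ satisfies the EWP.
   Context: A rational function $f\in\mathbb{Q}(x)$ satisfies the EWP if for some $N\ge1$ every rational number can be written as $\epsilon_1f(a_1)+\cdots+\epsilon_Nf(a_N)$ with $\epsilon_i\in\{1,-1\}$ and $a_i\in\mathbb{Q}$ not poles of $f$. *)

(* Defs.v *)
From HB Require Import structures.
From mathcomp Require Import all_boot all_order all_algebra.
Set Implicit Arguments. Unset Strict Implicit. Unset Printing Implicit Defensive.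
Import Order.TTheory GRing.Theory Num.Theory.
Local Open Scope ring_scope.

(* A Laurent polynomial f in K[x, x^{-1}] is represented as p(x) / x^k with
   p : {poly K} and k : nat (every Laurent polynomial has this form).
   Its value at a nonzero a : K is p.[a] / a^k. *)
Definition laurent_eval (K : fieldType) (p : {poly K}) (k : nat) (a : K) : K :=
  p.[a] / a ^+ k.

(* f = p / x^k is constant in K[x, x^{-1}] iff p = c * x^k for some c : K. *)
Definition laurent_nonconstant (K : fieldType) (p : {poly K}) (k : nat) : Prop :=
  forall c : K, p != c *: 'X^k.

(* Main.v *)
Require Import Defs.
From HB Require Import structures.
From mathcomp Require Import all_boot all_order all_algebra.
From mathcomp Require Import ring zify.
Import Order.TTheory GRing.Theory Num.Theory.
Set Implicit Arguments. Unset Strict Implicit. Unset Printing Implicit Defensive.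
Local Open Scope ring_scope.



Definition Wt (K : fieldType) (k i : nat) (P : seq (K * K)) : K :=
  \sum_(q <- P) q.1 * q.2 ^+ i / q.2 ^+ k.
Definition valL (K : fieldType) (p : {poly K}) (k : nat) (P : seq (K * K)) (x : K) : K :=
  \sum_(q <- P) q.1 * laurent_eval p k (q.2 * x).

Lemma valL_W (K : fieldType) (p : {poly K}) (k : nat) (P : seq (K * K)) (x : K) :
  valL p k P x = (\sum_(i < size p) p`_i * Wt k i P * x ^+ i) / x ^+ k.
Proof.
rewrite /valL /Wt big_distrl /=.
under eq_bigr => q _ do rewrite /laurent_eval horner_coef big_distrl big_distrr /=.
rewrite exchange_big /=; apply: eq_bigr => i _.
rewrite !big_distrr !big_distrl /=; apply: eq_bigr => q _.
rewrite !exprMn invfM; ring.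
Qed.

Definition prodP (K : fieldType) (L P : seq (K * K)) : seq (K * K) :=
  [seq (a.1 * b.1, a.2 * b.2) | a <- L, b <- P].

Lemma Wt_prod (K : fieldType) k i (L P : seq (K * K)) :
  Wt k i (prodP L P) = Wt k i L * Wt k i P.
Proof.
rewrite /Wt /prodP big_allpairs_dep big_distrl /=; apply: eq_bigr => a _.
rewrite big_distrr /=; apply: eq_bigr => b _.
rewrite !exprMn invfM; ring.
Qed.



Lemma sum_nseq (K : fieldType) (T : Type) (n : nat) (a : T) (F : T -> K) :
  \sum_(q <- nseq n a) F q = F a *+ n.
Proof. by elim: n => [|n IH]; rewrite ?big_nil // big_cons IH mulrS. Qed.

Lemma natr_eq0K (K : fieldType) (charK0 : [pchar K] =i pred0) (n : nat) :
  (n%:R == 0 :> K) = (n == 0)%N.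
Proof. by move/pcharf0P: charK0. Qed.

Lemma natrK_inj (K : fieldType) (charK0 : [pchar K] =i pred0) (m n : nat) :
  (m%:R = n%:R :> K) -> m = n.
Proof.
wlog le_mn : m n / (m <= n)%N.
  by move=> W; case/orP: (leq_total m n) => H E; [|symmetry]; apply: W.
move=> E; have: ((n - m)%N%:R == 0 :> K) by rewrite natrB // E subrr.
by rewrite natr_eq0K // subn_eq0 => H; apply/eqP; rewrite eqn_leq le_mn H.
Qed.

Lemma two_neq0 (K : fieldType) (charK0 : [pchar K] =i pred0) : (2 : K) != 0.
Proof. by rewrite (natr_eq0K charK0). Qed.

Lemma pow2_inj (K : fieldType) (charK0 : [pchar K] =i pred0) (i j : nat) :
  (2 : K) ^+ i = 2 ^+ j -> i = j.
Proof.
rewrite -!natrX => /(natrK_inj charK0) /eqP; rewrite eqn_exp2l //; by move/eqP.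
Qed.

Definition Lj (K : fieldType) (k j : nat) : seq (K * K) :=
  nseq (2 ^ k) (1, 2) ++ nseq (2 ^ j) (-1, 1).

Lemma Wt_Lj (K : fieldType) (charK0 : [pchar K] =i pred0) k i j :
  Wt k i (Lj K k j) = 2 ^+ i - 2 ^+ j.
Proof.
rewrite /Wt /Lj big_cat !sum_nseq /= !expr1n divr1 !mul1r mulN1r.
rewrite -[_ *+ 2 ^ k]mulr_natr -[_ *+ 2 ^ j]mulr_natr !natrX mulN1r divfK // expf_neq0 //; exact: two_neq0.
Qed.

Definition good (K : fieldType) (P : seq (K * K)) :=
  all (fun q => ((q.1 == 1) || (q.1 == -1)) && (q.2 != 0)) P.

Lemma good_Lj (K : fieldType) (charK0 : [pchar K] =i pred0) k j : good (Lj K k j).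
Proof.
rewrite /good /Lj all_cat; apply/andP; split; apply/allP => q /nseqP [-> _] /=.
  by rewrite eqxx /= two_neq0.
by rewrite eqxx orbT oner_neq0.
Qed.

Lemma good_prod (K : fieldType) (L P : seq (K * K)) :
  good L -> good P -> good (prodP L P).
Proof.
move=> /allP HL /allP HP; apply/allP => q /allpairsP [[a b] /= [Ha Hb ->]] /=.
move: (HL a Ha) (HP b Hb) => /andP [Sa Na] /andP [Sb Nb].
rewrite mulf_neq0 // andbT.
by case/orP: Sa => /eqP ->; case/orP: Sb => /eqP ->;
  rewrite ?mul1r ?mulN1r ?opprK ?eqxx ?orbT.
Qed.

Definition PJ (K : fieldType) (k : nat) (J : seq nat) : seq (K * K) :=
  foldr (fun j acc => prodP (Lj K k j) acc) [:: (1, 1)] J.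

Lemma Wt_PJ (K : fieldType) (charK0 : [pchar K] =i pred0) k i J :
  Wt k i (PJ K k J) = \prod_(j <- J) (2 ^+ i - 2 ^+ j).
Proof.
elim: J => [|j J IH] /=.
  by rewrite /Wt big_seq1 big_nil /= !expr1n divr1 mulr1.
by rewrite Wt_prod IH Wt_Lj // big_cons.
Qed.

Lemma good_PJ (K : fieldType) (charK0 : [pchar K] =i pred0) k J : good (PJ K k J).
Proof.
elim: J => [|j J IH] /=; last by apply: good_prod => //; apply: good_Lj.
by rewrite /good /= eqxx oner_neq0.
Qed.

Lemma isolate (K : fieldType) (charK0 : [pchar K] =i pred0) (p : {poly K}) k r :
  p`_r != 0 -> exists P : seq (K * K), good P /\ exists D : K, D != 0 /\
    forall x, valL p k P x = D * x ^+ r / x ^+ k.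
Proof.
move=> Hr.
have rlt : (r < size p)%N.
  by rewrite ltnNge; apply: contra Hr => H; rewrite nth_default.
set J := [seq j <- iota 0 (size p) | j != r].
exists (PJ K k J); split; first exact: good_PJ.
exists (p`_r * Wt k r (PJ K k J)); split.
  rewrite mulf_neq0 // Wt_PJ // prodf_seq_neq0; apply/allP => j.
  rewrite mem_filter => /andP [jr _] /=; rewrite subr_eq0.
  by apply: contra jr => /eqP /(pow2_inj charK0) ->.
move=> x; rewrite valL_W (bigD1 (Ordinal rlt)) //= big1 ?addr0 //.
move=> i ir; rewrite Wt_PJ //.
have -> : \prod_(j <- J) (2 ^+ i - 2 ^+ j) = 0 :> K.
  apply/eqP; rewrite prodf_seq_eq0; apply/hasP; exists (nat_of_ord i).
    rewrite mem_filter mem_iota /= ltn_ord andbT; apply: contra ir => /eqP E.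
    by apply/eqP/val_inj.
  by rewrite /= subrr eqxx.
by rewrite mulr0 mul0r.
Qed.



Definition Dlt (K : fieldType) (q : {poly K}) : {poly K} :=
  \sum_(i < size q) q^`N(i.+1).

Lemma Dlt_horner (K : fieldType) (q : {poly K}) y : (Dlt q).[y] = q.[y + 1] - q.[y].
Proof.
rewrite (@nderiv_taylor_wide _ (size q).+1) //; last exact: commr1.
rewrite big_ord_recl nderivn0 expr0 mulr1 /Dlt horner_sum.
under [X in _ = _ + X - _]eq_bigr => i _ do rewrite expr1n mulr1.
by rewrite addrC addKr.
Qed.

Lemma Dlt_coef (K : fieldType) (q : {poly K}) j :
  (Dlt q)`_j = \sum_(i < size q) q`_(i.+1 + j) *+ 'C(i.+1 + j, i.+1).
Proof. by rewrite /Dlt coef_sum; apply: eq_bigr => i _; rewrite coef_nderivn. Qed.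

Lemma Dstep (K : fieldType) (q : {poly K}) m :
  (size q <= m.+2)%N -> (size (Dlt q) <= m.+1)%N /\ (Dlt q)`_m = q`_m.+1 *+ m.+1.
Proof.
move=> Hs; split.
  apply/leq_sizeP => j hj; rewrite Dlt_coef big1 // => i _.
  by rewrite nth_default ?mul0rn //; apply: leq_trans Hs _; lia.
rewrite Dlt_coef; case Es: (size q) => [|s].
  by rewrite big_ord0 nth_default ?mul0rn ?Es.
rewrite big_ord_recl /= big1 ?addr0; first by rewrite add1n bin1.
move=> i _; rewrite nth_default ?mul0rn //; rewrite Es /bump /=; lia.
Qed.

Lemma Diter (K : fieldType) (q : {poly K}) n t :
  (size q <= n.+1)%N -> (t <= n)%N ->
  (size (iter t (@Dlt K) q) <= (n - t).+1)%N /\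
  (iter t (@Dlt K) q)`_(n - t) = q`_n *+ (n ^_ t).
Proof.
move=> Hq; elim: t => [|t IH] Ht.
  by rewrite /= subn0 ffactn0 mulr1n.
have [IH1 IH2] := IH (ltnW Ht).
have E : (n - t = (n - t.+1).+1)%N by lia.
rewrite E in IH1 IH2.
have [S1 S2] := Dstep IH1.
by rewrite iterS; split => //; rewrite S2 IH2 -mulrnA ffactnSr -E.
Qed.

Fixpoint Sh (K : fieldType) (t : nat) : seq (K * nat) :=
  if t is t'.+1 then [seq (e.1, e.2.+1) | e <- Sh K t'] ++ [seq (- e.1, e.2) | e <- Sh K t']
  else [:: (1, 0%N)].

Lemma Sh_val (K : fieldType) t (q : {poly K}) y :
  \sum_(e <- Sh K t) e.1 * q.[y + e.2%:R] = (iter t (@Dlt K) q).[y].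
Proof.
elim: t q => [|t IH] q /=; first by rewrite big_seq1 /= addr0 mul1r.
rewrite big_cat !big_map /=.
have -> : Dlt (iter t (@Dlt K) q) = iter t (@Dlt K) (Dlt q) by rewrite -iterS iterSr.
rewrite -IH -big_split /=.
apply: eq_bigr => e _; rewrite Dlt_horner -addn1 natrD addrA; ring.
Qed.

Lemma Sh_good (K : fieldType) t : all (fun e => (e.1 == 1) || (e.1 == -1 :> K)) (Sh K t).
Proof.
elim: t => [|t IH] /=; first by rewrite eqxx.
rewrite all_cat !all_map; apply/andP; split; apply: sub_all IH => e /=.
  by [].
by case/orP => /eqP ->; rewrite ?opprK eqxx ?orbT.
Qed.

Lemma Sh_size (K : fieldType) t : size (Sh K t) = (2 ^ t)%N.
Proof. by elim: t => [|t IH] //=; rewrite size_cat !size_map IH expnS mul2n addnn. Qed.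



Lemma inst_val (K : fieldType) (p : {poly K}) k P r D
  (HP : forall x, valL p k P x = D * x ^+ r / x ^+ k) (rk : r != k) (z : K) :
  z != 0 ->
  valL p k P (if (k < r)%N then z else z^-1) = D * z ^+ (if (k < r)%N then (r - k)%N else (k - r)%N).
Proof.
move=> z0; case: ltnP => h; rewrite HP.
  rewrite -{1}(subnK (ltnW h)) exprD mulrA mulfK // expf_neq0 //.
have h' : (r < k)%N by rewrite ltn_neqAle rk h.
rewrite !exprVn invrK.
have -> : z ^+ k = z ^+ (k - r) * z ^+ r by rewrite -exprD subnK // ltnW.
rewrite mulrA [_ / _ * _]mulrAC divfK //; exact: expf_neq0.
Qed.

Definition block (K : fieldType) (P : seq (K * K)) (inst : K -> K) (e z : K) : seq (K * K) :=
  if z != 0 then [seq (e * q.1, q.2 * inst z) | q <- P ++ P]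
  else flatten (nseq (size P) [:: (1, 1); (-1, 1)]).

Lemma block_val (K : fieldType) (p : {poly K}) k P inst D n
  (H : forall z, z != 0 -> valL p k P (inst z) = D * z ^+ n) (n0 : (0 < n)%N) (e z : K) :
  \sum_(b <- block P inst e z) b.1 * laurent_eval p k b.2 = e * (D *+ 2 * z ^+ n).
Proof.
rewrite /block; case: ifP => z0.
  rewrite big_map /= big_cat /=.
  have := H z z0; rewrite /valL => E.
  under eq_bigr => q _ do rewrite -mulrA.
  rewrite -!big_distrr /= E mulr2n mulrDl; ring.
move/negbFE/eqP: z0 => ->; rewrite expr0n gtn_eqF // mulr0 mulr0.
rewrite big_flatten /= sum_nseq big_cons big_seq1 /= mul1r mulN1r subrr.
by rewrite mul0rn.
Qed.

Lemma block_good (K : fieldType) (P : seq (K * K)) inst (e z : K) :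
  good P -> (forall z, z != 0 -> inst z != 0) -> (e == 1) || (e == -1) ->
  good (block P inst e z).
Proof.
move=> /allP gP i0 he; rewrite /block; case: ifP => z0.
  apply/allP => b /mapP [q]; rewrite mem_cat orbb => qP -> /=.
  case/andP: (gP q qP) => sq nq; rewrite mulf_neq0 ?i0 // andbT.
  by case/orP: he => /eqP ->; case/orP: sq => /eqP ->;
    rewrite ?mul1r ?mulN1r ?opprK ?eqxx ?orbT.
apply/allP => b /flattenP [s /nseqP [-> _]]; rewrite !inE => /orP [] /eqP -> /=.
  by rewrite eqxx oner_neq0.
by rewrite eqxx orbT oner_neq0.
Qed.

Lemma size_flatten_nseq (T : Type) m (s : seq T) : size (flatten (nseq m s)) = (m * size s)%N.
Proof. by elim: m => [|m IH] //=; rewrite size_cat IH mulSn. Qed.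

Lemma block_size (K : fieldType) (P : seq (K * K)) inst (e z : K) :
  size (block P inst e z) = (size P * 2)%N.
Proof.
rewrite /block; case: ifP => _; first by rewrite size_map size_cat muln2 addnn.
by rewrite size_flatten_nseq.
Qed.

Lemma size_flatten_map (T U : Type) (g : T -> seq U) c (l : seq T) :
  (forall x, size (g x) = c) -> size (flatten (map g l)) = (size l * c)%N.
Proof. by move=> H; elim: l => [|x l IH] //=; rewrite size_cat IH H mulSn. Qed.



Lemma exists_r (K : fieldType) (p : {poly K}) (k : nat) :
  laurent_nonconstant p k -> exists r, r != k /\ p`_r != 0.
Proof.
move=> Hnc.
case: (boolP [exists i : 'I_(size p), (val i != k) && (p`_i != 0)]).
  by move/existsP => [i /andP [h1 h2]]; exists (val i).
move/existsPn => Hn; exfalso; move: (Hnc p`_k); apply/negP/negPn/eqP/polyP => i.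
rewrite coefZ coefXn; case: eqP => [->|ne]; first by rewrite mulr1.
rewrite mulr0; case: (ltnP i (size p)) => hi; last by rewrite nth_default.
move: (Hn (Ordinal hi)) => /=; rewrite negb_and negbK.
case/orP => [/eqP //|]; by rewrite negbK => /eqP.
Qed.

Lemma seq_rep (K : fieldType) (p : {poly K}) (k : nat) :
  (exists N : nat, (0 < N)%N /\ forall c : K, exists s : seq (K * K),
     size s = N /\ good s /\ c = \sum_(b <- s) b.1 * laurent_eval p k b.2) ->
  exists N : nat, (0 < N)%N /\
    forall c : K, exists (a : 'I_N -> K) (eps : 'I_N -> K),
      (forall i, a i != 0) /\ (forall i, eps i = 1 \/ eps i = -1) /\
      c = \sum_(i < N) eps i * laurent_eval p k (a i).
Proof.
move=> [N [N0 H]]; exists N; split => // c.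
have [s [ss [gs ->]]] := H c.
exists (fun i => (nth (1, 1) s i).2), (fun i => (nth (1, 1) s i).1).
have gi : forall i : 'I_N, ((nth (1, 1) s i).1 == 1 :> K) || ((nth (1, 1) s i).1 == -1)
     /\ ((nth (1, 1) s i).2 != 0).
  move=> i; have : nth (1, 1) s i \in s by rewrite mem_nth // ss.
  by move/(allP gs)/andP.
split; first by move=> i; case: (gi i).
split; first by move=> i; case: (gi i) => /orP [] /eqP -> _; [left|right].
by rewrite (big_nth (1, 1)) big_mkord ss.
Qed.

Unset Implicit Arguments.

Theorem theorem3p1 (K : fieldType) (charK0 : [pchar K] =i pred0)
    (p : {poly K}) (k : nat) (Hnc : laurent_nonconstant p k) :
  exists N : nat, (0 < N)%N /\
    forall c : K, exists (a : 'I_N -> K) (eps : 'I_N -> K),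
      (forall i, a i != 0) /\ (forall i, eps i = 1 \/ eps i = -1) /\
      c = \sum_(i < N) eps i * laurent_eval p k (a i).
Proof.
apply: seq_rep.
have [r [rk pr]] := exists_r Hnc.
have [P [gP [D [D0 HP]]]] := isolate charK0 k pr.
have n0' : (0 < if (k < r)%N then (r - k)%N else (k - r)%N)%N.
  by case: (ltnP k r) => h /=; move/eqP: rk => rk; lia.
pose n := if (k < r)%N then (r - k)%N else (k - r)%N.
pose inst := fun z : K => if (k < r)%N then z else z^-1.
have n0 : (0 < n)%N by exact: n0'.
have Hinst : forall z, z != 0 -> valL p k P (inst z) = D * z ^+ n.
  by move=> z z0; rewrite /inst /n (inst_val HP).
have inst0 : forall z, z != 0 -> inst z != 0.
  by move=> z z0; rewrite /inst; case: ifP => _; rewrite ?invr_neq0.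
have sP : (0 < size P)%N.
  case: P HP {gP Hinst} => [|q P] // HP; move: (HP 1).
  by rewrite /valL big_nil !expr1n divr1 mulr1 => E; move: D0; rewrite -E eqxx.
pose q : {poly K} := (D *+ 2) *: 'X^n.
pose R := iter n.-1 (@Dlt K) q.
have [RS R1] : (size R <= (n - n.-1).+1)%N /\ R`_(n - n.-1) = q`_n *+ (n ^_ n.-1).
  apply: Diter; last by rewrite leq_pred.
  by apply: leq_trans (size_scale_leq _ _) _; rewrite size_polyXn.
have E1 : (n - n.-1 = 1)%N by lia.
rewrite E1 in RS R1.
have R1nz : R`_1 != 0.
  rewrite R1 /q coefZ coefXn eqxx mulr1 -mulrnA -mulr_natr mulf_neq0 //.
  by rewrite natr_eq0K // muln_eq0 /= -lt0n ffact_gt0 leq_pred.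
exists (2 ^ n.-1 * (size P * 2))%N; split.
  by rewrite muln_gt0 expn_gt0 /= muln_gt0 sP.
move=> c.
pose y := (c - R`_0) / R`_1.
exists (flatten [seq block P inst e.1 (y + e.2%:R) | e <- Sh K n.-1]).
split.
  by rewrite (@size_flatten_map _ _ _ (size P * 2)%N) ?Sh_size // => e; rewrite block_size.
split.
  apply/allP => b /flattenP [s /mapP [e eS ->]] bs.
  have := @block_good K P inst e.1 (y + e.2%:R) gP inst0 (allP (Sh_good K n.-1) e eS).
  by move/allP/(_ b bs).
rewrite big_flatten /= big_map.
under eq_bigr => e _ do rewrite (block_val Hinst n0).
have -> : \sum_(e <- Sh K n.-1) e.1 * (D *+ 2 * (y + e.2%:R) ^+ n)
        = \sum_(e <- Sh K n.-1) e.1 * q.[y + e.2%:R].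
  by apply: eq_bigr => e _; rewrite /q hornerZ hornerXn.
rewrite Sh_val -/R (horner_coef_wide _ RS) !big_ord_recl big_ord0 /= addr0.
by rewrite expr0 mulr1 expr1 /y mulrC divfK // addrC subrK.
Qed.
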